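(* Let $X\subset A^+$ be a finite set which is the minimal generating set of the submonoid $X^*$. For every trim automaton $\mathcal{B}=(Q,i,i)$ recognizing $X^*$ with multiplicities, there is a sharp reduction from the flower automaton of $X$ onto $\mathcal{B}$.
   Context: Automata $(Q,i,t)$: finite state set, initial state $i$, terminal state $t$, edges $p\xrightarrow{a}q$ with $a\in A$ (a set of triples). The behaviour $|\mathcal{A}|$ assigns to $w\in A^*$ the number of paths from $i$ to $t$ labeled $w$; $\mathcal{A}$ recognizes $X^*$ with multiplicities if $|\mathcal{A}|=\underline{X}^*$, i.e. for every $w$ the number of such paths equals the number of factorizations of $w$ into words of $X$. An automaton is trim if every state lies on some path from the initial state to the terminal state. The flower automaton of $X$ has states $\{(u,v)\in A^+\times A^+\mid uv\in X\}\cup\{\omega\}$, $\omega=(1,1)$ initial and terminal, and edges $(u,av)\xrightarrow{a}(ua,v)$ for $uav\in X$, $u,v\ne1$; $\omega\xrightarrow{a}(a,v)$ for $av\in X$, $v\ne1$; $(u,a)\xrightarrow{a}\omega$ for $ua\in X$, $u\neq 1$; $\omega\xrightarrow{a}\omega$ for $a\in X$. A reduction from $(P,i,t)$ onto $(Q,j,u)$ is a surjective map $\rho:P\to Q$ with $\rho(i)=j,\rho(t)=u$ such that for all $q,q'\in Q$, $w\in A^*$, there is a path $q\xrightarrow{w}q'$ in the second automaton iff there is a path $p\xrightarrow{w}p'$ in the first with $\rho(p)=q,\rho(p')=q'$. It is sharp if $\rho^{-1}(j)=\{i\}$ and $\rho^{-1}(u)=\{t\}$. *)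

(* Defs.v *)
From mathcomp Require Import all_boot.
Set Implicit Arguments. Unset Strict Implicit. Unset Printing Implicit Defensive.

Section Words.
Variable A : finType.

Definition in_star (X : seq (seq A)) (w : seq A) : Prop :=
  exists xs : seq (seq A), all (fun x => x \in X) xs /\ flatten xs = w.

Definition minimal_generating_set (X : seq (seq A)) : Prop :=
  forall w : seq A,
    w \in X <->
    (w <> [::] /\ in_star X w /\
     ~ (exists u v : seq A, u <> [::] /\ v <> [::] /\
          in_star X u /\ in_star X v /\ w = u ++ v)).

Fixpoint is_path (S : Type) (e : S -> A -> S -> Prop) (p : S) (w : seq A) (p' : S)
  : Prop :=
  match w with
  | [::] => p = p'
  | a :: w' => exists q, e p a q /\ is_path e q w' p'
  end.

Fixpoint npaths (Q : finType) (E : Q -> A -> Q -> bool) (p : Q) (w : seq A) (p' : Q)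
  : nat :=
  match w with
  | [::] => nat_of_bool (p == p')
  | a :: w' => \sum_(q : Q) nat_of_bool (E p a q) * npaths E q w' p'
  end.

Definition edgeP (Q : Type) (E : Q -> A -> Q -> bool) : Q -> A -> Q -> Prop :=
  fun p a q => E p a q.

(** (Q,i,t) recognizes X^* with multiplicities: for every word w the number of
    paths i --w--> t equals the number of factorizations of w into words of X. *)
Definition recognizes_star_mult (Q : finType) (E : Q -> A -> Q -> bool) (i t : Q)
  (X : seq (seq A)) : Prop :=
  forall w : seq A, exists s : seq (seq (seq A)),
    uniq s /\
    (forall xs, xs \in s <-> (all (fun x => x \in X) xs /\ flatten xs = w)) /\
    npaths E i w t = size s.

Definition trim (S : Type) (e : S -> A -> S -> Prop) (i t : S) : Prop :=
  forall q : S, exists u v : seq A, is_path e i u q /\ is_path e q v t.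

Definition reduction (P Q : Type) (eP : P -> A -> P -> Prop) (i t : P)
  (eQ : Q -> A -> Q -> Prop) (j u : Q) (rho : P -> Q) : Prop :=
  (forall q : Q, exists p : P, rho p = q) /\
  rho i = j /\ rho t = u /\
  (forall (q q' : Q) (w : seq A),
     is_path eQ q w q' <->
     exists p p' : P, rho p = q /\ rho p' = q' /\ is_path eP p w p').

Definition sharp_reduction (P Q : Type) (eP : P -> A -> P -> Prop) (i t : P)
  (eQ : Q -> A -> Q -> Prop) (j u : Q) (rho : P -> Q) : Prop :=
  reduction eP i t eQ j u rho /\
  (forall p : P, rho p = j -> p = i) /\
  (forall p : P, rho p = u -> p = t).

Definition flower_pred (X : seq (seq A)) (p : seq A * seq A) : bool :=
  (p == ([::], [::])) || [&& p.1 != [::], p.2 != [::] & p.1 ++ p.2 \in X].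

Definition flower_state (X : seq (seq A)) := {p : seq A * seq A | flower_pred X p}.

Lemma flower_omega_proof (X : seq (seq A)) : flower_pred X ([::], [::]).
Proof. by rewrite /flower_pred eqxx. Qed.

Definition flower_omega (X : seq (seq A)) : flower_state X :=
  exist _ ([::], [::]) (flower_omega_proof X).

Definition flower_edge_pairs (X : seq (seq A)) (p : seq A * seq A) (a : A)
  (p' : seq A * seq A) : Prop :=
  (p.1 <> [::] /\ p'.2 <> [::] /\ p.2 = a :: p'.2 /\ p'.1 = rcons p.1 a /\
     p.1 ++ a :: p'.2 \in X) \/
  (p = ([::], [::]) /\ p'.1 = [:: a] /\ p'.2 <> [::] /\ a :: p'.2 \in X) \/
  (p.1 <> [::] /\ p.2 = [:: a] /\ p' = ([::], [::]) /\ rcons p.1 a \in X) \/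
  (p = ([::], [::]) /\ p' = ([::], [::]) /\ [:: a] \in X).

Definition flower_edge (X : seq (seq A)) (p : flower_state X) (a : A)
  (p' : flower_state X) : Prop :=
  flower_edge_pairs X (proj1_sig p) a (proj1_sig p').

End Words.

(* Main.v *)
Require Import Defs.
From mathcomp Require Import all_boot.
Set Implicit Arguments. Unset Strict Implicit. Unset Printing Implicit Defensive.

Fixpoint okr (A : finType) (Q : Type) (E : Q -> A -> Q -> bool) (p : Q) (w : seq A) (s : seq Q) : bool :=
  match w, s with
  | [::], [::] => true
  | a :: w', q :: s' => E p a q && okr E q w' s'
  | _, _ => false
  end.

Fixpoint all_seqs (Q : finType) (n : nat) : seq (seq Q) :=
  if n is n'.+1 then [seq q :: s | q <- enum Q, s <- all_seqs Q n'] else [:: [::]].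

Lemma mem_all_seqs (Q : finType) n (s : seq Q) : (s \in all_seqs Q n) = (size s == n).
Proof.
elim: n s => [|n IH] [|q s] //=.
- apply/negbTE/allpairsP => [[[x y] [_ _ /=]]] //.
- rewrite eqSS -IH; apply/allpairsP/idP => [[[x y] [_ /= Hy [? ?]]]|Hs]; first by subst.
  by exists (q, s); rewrite mem_enum.
Qed.

Lemma uniq_all_seqs (Q : finType) n : uniq (all_seqs Q n).
Proof.
elim: n => [|n IH] //=.
apply: allpairs_uniq => //; first exact: enum_uniq.
by move=> [x y] [x' y'] _ _ [-> ->].
Qed.

Lemma size_okr (A : finType) (Q : Type) (E : Q -> A -> Q -> bool) p w s : okr E p w s -> size s = size w.
Proof. by elim: w p s => [|a w IH] p [|q s] //= /andP[_ /IH ->]. Qed.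

Lemma npaths_count (A Q : finType) (E : Q -> A -> Q -> bool) p w p' :
  npaths E p w p' = count (fun s => okr E p w s && (last p s == p')) (all_seqs Q (size w)).
Proof.
elim: w p => [|a w IH] p /=; first by rewrite addn0.
rewrite count_flatten sumnE !big_map.
rewrite [index_enum Q]unlock; apply: eq_bigr => q _.
rewrite count_map IH /preim /=.
case: (E p a q) => /=; first by rewrite mul1n.
by rewrite mul0n; elim: (all_seqs Q (size w)).
Qed.

Lemma is_path_okr (A : finType) (Q : Type) (E : Q -> A -> Q -> bool) p w p' :
  is_path (edgeP E) p w p' <-> exists s, okr E p w s /\ last p s = p'.
Proof.
elim: w p => [|a w IH] p /=.
  split=> [->|[[|q s] [//= _ ->]]]; first by exists [::].
split=> [[q [Hq /IH [s [Hs Hl]]]]|[[|q s] [H Hl]]] //.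
  by exists (q :: s); split => //=; rewrite Hs andbT.
move: H => /= /andP[Hq Hs].
by exists q; split => //; apply/IH; exists s.
Qed.

Lemma okr_take (A : finType) (Q : Type) (E : Q -> A -> Q -> bool) p w s k :
  okr E p w s -> okr E p (take k w) (take k s).
Proof.
elim: w p s k => [|a w IH] p [|q s] [|k] //= /andP[-> /IH]; exact.
Qed.

Lemma okr_drop (A : finType) (Q : Type) (E : Q -> A -> Q -> bool) p w s k :
  okr E p w s -> okr E (last p (take k s)) (drop k w) (drop k s).
Proof.
elim: w p s k => [|a w IH] p [|q s] [|k] //= /andP[H1 H2] //.
exact: IH.
Qed.

Lemma okr_cat (A : finType) (Q : Type) (E : Q -> A -> Q -> bool) p u v s t :
  okr E p u s -> okr E (last p s) v t -> okr E p (u ++ v) (s ++ t).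
Proof.
elim: u p s => [|a u IH] p [|q s] //= /andP[-> Hs] Ht /=; exact: IH.
Qed.

Lemma okr_step (A : finType) (Q : Type) (E : Q -> A -> Q -> bool) p w s k a0 :
  okr E p w s -> k < size w ->
  E (last p (take k s)) (nth a0 w k) (last p (take k.+1 s)).
Proof.
elim: w p s k => [|a w IH] p [|q s] [|k] //= /andP[H1 H2] Hk //.
- by rewrite take0.
- exact: IH.
Qed.

Lemma npaths_pos (A Q : finType) (E : Q -> A -> Q -> bool) p w p' :
  0 < npaths E p w p' <-> exists s, okr E p w s /\ last p s = p'.
Proof.
rewrite npaths_count -has_count; split.
  by move=> /hasP[s _ /andP[H1 /eqP H2]]; exists s.
move=> [s [H1 H2]]; apply/hasP; exists s; last by rewrite H1 H2 eqxx.
by rewrite mem_all_seqs (size_okr H1) eqxx.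
Qed.

Lemma runs_le (A Q : finType) (E : Q -> A -> Q -> bool) p w p' (L : seq (seq Q)) :
  uniq L -> (forall s, s \in L -> okr E p w s /\ last p s = p') ->
  size L <= npaths E p w p'.
Proof.
move=> uL HL; rewrite npaths_count -size_filter.
apply: uniq_leq_size => // s /HL [H1 H2].
by rewrite mem_filter /= H1 H2 eqxx mem_all_seqs (size_okr H1) eqxx.
Qed.

Lemma runs_all (A Q : finType) (E : Q -> A -> Q -> bool) p w p' (L : seq (seq Q)) s :
  uniq L -> (forall s, s \in L -> okr E p w s /\ last p s = p') ->
  npaths E p w p' <= size L -> okr E p w s -> last p s = p' -> s \in L.
Proof.
move=> uL HL Hn H1 H2.
have sub : {subset L <= filter (fun s => okr E p w s && (last p s == p')) (all_seqs Q (size w))}.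
  move=> t /HL [T1 T2].
  by rewrite mem_filter /= T1 T2 eqxx mem_all_seqs (size_okr T1) eqxx.
have := uniq_min_size uL sub; rewrite size_filter -npaths_count => /(_ Hn) [_ H].
by rewrite H mem_filter /= H1 H2 eqxx mem_all_seqs (size_okr H1) eqxx.
Qed.

Lemma last_take_nth (T : Type) (d : T) s k : k < size s -> last d (take k.+1 s) = nth d s k.
Proof. by move=> Hk; rewrite (take_nth d Hk) last_rcons. Qed.

Definition runX (A Q : finType) (E : Q -> A -> Q -> bool) (i : Q) (x : seq A) : seq Q :=
  head [::] (filter (fun s => okr E i x s && (last i s == i)) (all_seqs Q (size x))).

Lemma head_filter (T : Type) (P : pred T) (L : seq T) d : has P L -> P (head d (filter P L)).
Proof. by elim: L => //= a L IH; case: ifP => //= _ /IH. Qed.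

Lemma runX_ok (A Q : finType) (E : Q -> A -> Q -> bool) i x :
  0 < npaths E i x i -> okr E i x (runX E i x) /\ last i (runX E i x) = i.
Proof.
rewrite npaths_count -has_count => /(head_filter [::]) /andP[H1 /eqP H2].
by split.
Qed.

Lemma starX (A Q : finType) (E : Q -> A -> Q -> bool) i X x :
  recognizes_star_mult E i i X -> x \in X -> 0 < npaths E i x i.
Proof.
move=> REC Hx; have [s [_ [Hs ->]]] := REC x.
have : [:: x] \in s by apply/Hs; rewrite /= Hx cats0.
by case: s {Hs}.
Qed.

Lemma pos_star (A Q : finType) (E : Q -> A -> Q -> bool) i X w :
  recognizes_star_mult E i i X -> 0 < npaths E i w i -> in_star X w.
Proof.
move=> REC; have [s [_ [Hs ->]]] := REC w.
case: s Hs => // xs s Hs _.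
have [H1 H2] := (Hs xs).1 (mem_head _ _).
by exists xs.
Qed.

Lemma noint (A Q : finType) (E : Q -> A -> Q -> bool) i X x R k :
  recognizes_star_mult E i i X -> minimal_generating_set X ->
  x \in X -> okr E i x R -> last i R = i -> 0 < k < size x ->
  last i (take k R) != i.
Proof.
move=> REC MIN Hx HR HL /andP[k0 kx]; apply/negP => /eqP Hi.
have [_ [_ Hno]] := (MIN x).1 Hx.
apply: Hno; exists (take k x), (drop k x); split.
  by move/(f_equal size); rewrite size_take kx => E0; rewrite E0 in k0.
split.
  by move/(f_equal size); rewrite size_drop /=; move/eqP; rewrite subn_eq0 leqNgt kx.
split.
  apply: (pos_star REC); apply/npaths_pos; exists (take k R); split; last by [].
  exact: okr_take.
split; last by rewrite cat_take_drop.
apply: (pos_star REC); apply/npaths_pos; exists (drop k R); split.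
  by rewrite -{1}Hi; apply: okr_drop.
by rewrite -{1}Hi -last_cat cat_take_drop.
Qed.

Lemma index_run (A Q : finType) (E : Q -> A -> Q -> bool) i X x R t :
  recognizes_star_mult E i i X -> minimal_generating_set X ->
  x \in X -> okr E i x R -> last i R = i -> 0 < size x ->
  index i (R ++ t) = (size x).-1.
Proof.
move=> REC MIN Hx HR HL sx.
have sR := size_okr HR.
case/lastP: R HR HL sR => [|b c] HR HL sR; first by rewrite -sR in sx.
rewrite last_rcons in HL; subst c.
have nib : i \notin b.
  apply/negP => ib.
  have := noint REC MIN Hx HR (last_rcons i b i) (k := (index i b).+1).
  rewrite -sR size_rcons ltnS ltnS index_mem ib => /(_ isT).
  rewrite last_take_nth; last by rewrite size_rcons ltnS ltnW // index_mem.
  by rewrite nth_rcons index_mem ib nth_index // eqxx.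
rewrite index_cat mem_rcons mem_head -cats1 index_cat (negPf nib) /= eqxx addn0.
by rewrite -sR size_rcons.
Qed.

Definition rr (A Q : finType) (E : Q -> A -> Q -> bool) (i : Q) (xs : seq (seq A)) : seq Q :=
  flatten (map (runX E i) xs).

Lemma rr_ok (A Q : finType) (E : Q -> A -> Q -> bool) i X xs :
  recognizes_star_mult E i i X -> all (fun x => x \in X) xs ->
  okr E i (flatten xs) (rr E i xs) /\ last i (rr E i xs) = i.
Proof.
move=> REC; elim: xs => [|x xs IH] //= /andP[Hx /IH [H1 H2]].
have [R1 R2] := runX_ok (starX REC Hx).
split; last by rewrite last_cat R2.
by apply: okr_cat => //; rewrite R2.
Qed.

Lemma rr_inj (A Q : finType) (E : Q -> A -> Q -> bool) i X xs ys :
  recognizes_star_mult E i i X -> minimal_generating_set X ->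
  (forall x : seq A, x \in X -> x != [::]) ->
  all (fun x => x \in X) xs -> all (fun x => x \in X) ys ->
  flatten xs = flatten ys -> rr E i xs = rr E i ys -> xs = ys.
Proof.
move=> REC MIN NE; elim: xs ys => [|x xs IH] [|y ys] //=.
- move=> _ /andP[Hy _] /esym/(f_equal size); rewrite size_cat /=.
  by move/eqP; rewrite addn_eq0 size_eq0 (negPf (NE y Hy)).
- move=> /andP[Hx _] _ /(f_equal size); rewrite size_cat /=.
  by move/eqP; rewrite addn_eq0 size_eq0 (negPf (NE x Hx)).
move=> /andP[Hx Hxs] /andP[Hy Hys] Hf Hr.
have [Rx1 Rx2] := runX_ok (starX REC Hx).
have [Ry1 Ry2] := runX_ok (starX REC Hy).
have sx : 0 < size x by rewrite lt0n size_eq0 (NE x Hx).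
have sy : 0 < size y by rewrite lt0n size_eq0 (NE y Hy).
have := f_equal (index i) Hr.
rewrite /rr /= (index_run _ REC MIN Hx Rx1 Rx2 sx) (index_run _ REC MIN Hy Ry1 Ry2 sy).
move=> Hs.
have exy : size x = size y by rewrite -(prednK sx) -(prednK sy) Hs.
have xy : x = y.
  by rewrite -(take_size_cat (flatten xs) (erefl (size x))) Hf take_size_cat.
subst y; congr (_ :: _); apply: IH => //.
  by have := f_equal (drop (size x)) Hf; rewrite !drop_size_cat.
have := f_equal (drop (size (runX E i x))) Hr; rewrite /rr /= !drop_size_cat //.
Qed.

Definition omg (A : finType) : seq A * seq A := ([::], [::]).

Fixpoint flpair (A : finType) (xs : seq (seq A)) (k : nat) : seq A * seq A :=
  match xs with
  | [::] => omg A
  | x :: xs' => if k < size x then (if k == 0 then omg A else (take k x, drop k x))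
                else flpair xs' (k - size x)
  end.

Definition rhoP (A Q : finType) (E : Q -> A -> Q -> bool) (i : Q) (pr : seq A * seq A) : Q :=
  last i (take (size pr.1) (runX E i (pr.1 ++ pr.2))).

Lemma flpair0 (A : finType) (xs : seq (seq A)) : flpair xs 0 = omg A.
Proof. by elim: xs => //= x xs IH; case: ifP => // _; rewrite sub0n. Qed.

Lemma flpair_pred (A : finType) X (xs : seq (seq A)) k :
  all (fun x => x \in X) xs -> flower_pred X (flpair xs k).
Proof.
elim: xs k => [|x xs IH] k /=; first by rewrite /flower_pred eqxx.
move=> /andP[Hx Hxs]; case: ifP => kx; last exact: IH.
case: eqP => k0; first by rewrite /flower_pred eqxx.
apply/orP; right; rewrite /= cat_take_drop Hx andbT; apply/andP; split.
  by apply/eqP => /(f_equal size); rewrite size_take kx; apply/eqP/eqP.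
by apply/eqP => /(f_equal size); rewrite size_drop /=; move/eqP; rewrite subn_eq0 leqNgt kx.
Qed.

Lemma st_rr (A Q : finType) (E : Q -> A -> Q -> bool) i X xs k :
  recognizes_star_mult E i i X -> all (fun x => x \in X) xs ->
  last i (take k (rr E i xs)) = rhoP E i (flpair xs k).
Proof.
move=> REC; elim: xs k => [|x xs IH] k /=; first by rewrite /rhoP /= take0.
move=> /andP[Hx Hxs].
have [R1 R2] := runX_ok (starX REC Hx).
have sR := size_okr R1.
rewrite /rr /= take_cat sR; case: ifP => kx.
  case: eqP => [->|k0]; first by rewrite take0 /rhoP /= take0.
  by rewrite /rhoP /= cat_take_drop size_take kx.
by rewrite last_cat R2 IH.
Qed.

Lemma fl_step (A : finType) X (xs : seq (seq A)) k a0 :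
  all (fun x => x \in X) xs -> k < size (flatten xs) ->
  flower_edge_pairs X (flpair xs k) (nth a0 (flatten xs) k) (flpair xs k.+1).
Proof.
elim: xs k => [|x xs IH] k //= /andP[Hx Hxs].
rewrite size_cat nth_cat.
case: (ltnP k (size x)) => kx.
  move=> _.
  case: (ltnP k.+1 (size x)) => k1x.
    case: eqP => [k0|k0].
      subst k; right; left.
      case: x kx k1x Hx {IH} => [|b [|c x]] //= _ _ Hx.
    rewrite /flower_edge_pairs /=; left; split.
      by apply/eqP; rewrite -size_eq0 size_take kx; apply/eqP.
    split.
      by apply/eqP; rewrite -size_eq0 size_drop subn_eq0 -ltnNge.
    split; first by rewrite (drop_nth a0 kx).
    split; first by rewrite (take_nth a0 kx).
    by rewrite -(drop_nth a0 kx) cat_take_drop.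
  have ex : size x = k.+1 by apply/eqP; rewrite eqn_leq kx k1x.
  rewrite ex subnn flpair0.
  case: eqP => [k0|k0].
    subst k; right; right; right.
    by case: x ex Hx {kx k1x IH} => [|b [|c x]] //= _ Hx.
  rewrite /flower_edge_pairs /=; right; right; left; split.
    by apply/eqP; rewrite -size_eq0 size_take kx; apply/eqP.
  split.
    by rewrite (drop_nth a0 kx) -ex drop_size.
  split => //.
  by rewrite -(take_nth a0 kx) -ex take_size.
rewrite [k.+1 < _]ltnNge (leqW kx) /= subSn // => H.
apply: IH => //; by rewrite -(ltn_add2l (size x)) subnKC.
Qed.

Lemma edge_rho (A Q : finType) (E : Q -> A -> Q -> bool) i X pr a pr' :
  recognizes_star_mult E i i X ->
  flower_edge_pairs X pr a pr' -> E (rhoP E i pr) a (rhoP E i pr').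
Proof.
move=> REC; case: pr pr' => [u v] [u' v'].
rewrite /flower_edge_pairs /rhoP /=.
case=> [[Hu [Hv [H2 [H1 HX]]]]|[[[-> ->] [H1 [Hv HX]]]|[[Hu [H2 [[-> ->] HX]]]|[[-> ->] [[-> ->] HX]]]]].
- subst v u'; rewrite cat_rcons size_rcons.
  have [R1 R2] := runX_ok (starX REC HX).
  have := okr_step (k := size u) a R1.
  by rewrite nth_cat ltnn subnn size_cat /= addnS ltnS leq_addr => /(_ isT).
- subst u'; rewrite /= take0.
  have [R1 R2] := runX_ok (starX REC HX).
  by have := okr_step (k := 0) a R1; rewrite take0 => /(_ isT).
- subst v; rewrite /= take0.
  rewrite -cats1 in HX.
  have [R1 R2] := runX_ok (starX REC HX).
  have := okr_step (k := size u) a R1.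
  rewrite nth_cat ltnn subnn size_cat /= addn1 ltnSn => /(_ isT).
  rewrite [take (size u).+1 _]take_oversize; first by rewrite R2.
  by rewrite (size_okr R1) size_cat addn1.
- rewrite /= take0.
  have [R1 R2] := runX_ok (starX REC HX).
  have := okr_step (k := 0) a R1; rewrite take0 /= => /(_ isT).
  rewrite [take 1 _]take_oversize; first by rewrite R2.
  by rewrite (size_okr R1).
Qed.

Definition fls (A : finType) (X : seq (seq A)) (xs : seq (seq A)) (k : nat) : flower_state X :=
  insubd (flower_omega X) (flpair xs k).

Lemma val_fls (A : finType) (X : seq (seq A)) xs k :
  all (fun x => x \in X) xs -> val (fls X xs k) = flpair xs k.
Proof. by move=> H; rewrite /fls insubdK //; apply: flpair_pred. Qed.

Lemma fl_path (A : finType) (X : seq (seq A)) xs n k :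
  all (fun x => x \in X) xs -> k + n <= size (flatten xs) ->
  is_path (flower_edge (X:=X)) (fls X xs k) (take n (drop k (flatten xs))) (fls X xs (k + n)).
Proof.
move=> Hxs; elim: n k => [|n IH] k Hk; first by rewrite take0 addn0.
have kz : k < size (flatten xs) by rewrite (leq_trans _ Hk) // -addSnnS leq_addr.
case Ez: (flatten xs) => [|a0 z']; first by rewrite Ez in kz.
rewrite -Ez (drop_nth a0 kz) /=.
exists (fls X xs k.+1); split.
  by rewrite /flower_edge !val_fls //; apply: fl_step.
by rewrite -addSnnS; apply: IH; rewrite addSnnS.
Qed.

Lemma back (A Q : finType) (E : Q -> A -> Q -> bool) i X u w v s1 s2 s3 q q' :
  recognizes_star_mult E i i X -> minimal_generating_set X ->
  (forall x : seq A, x \in X -> x != [::]) ->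
  okr E i u s1 -> last i s1 = q -> okr E q w s2 -> last q s2 = q' ->
  okr E q' v s3 -> last q' s3 = i ->
  exists p p' : flower_state X, rhoP E i (val p) = q /\ rhoP E i (val p') = q' /\
    is_path (flower_edge (X:=X)) p w p'.
Proof.
move=> REC MIN NE H1 L1 H2 L2 H3 L3.
set S := s1 ++ s2 ++ s3.
have HS : okr E i (u ++ w ++ v) S.
  apply: okr_cat => //; rewrite L1; apply: okr_cat => //; by rewrite L2.
have LS : last i S = i by rewrite /S !last_cat L1 L2.
have [F [uF [HF HN]]] := REC (u ++ w ++ v).
have injr : {in F &, injective (rr E i)}.
  move=> xs ys /HF [Ax Fx] /HF [Ay Fy] Hr.
  by apply: (rr_inj REC MIN NE Ax Ay) => //; rewrite Fx Fy.
have uL : uniq (map (rr E i) F) by rewrite map_inj_in_uniq.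
have allL : forall s, s \in map (rr E i) F -> okr E i (u ++ w ++ v) s /\ last i s = i.
  move=> s /mapP [xs /HF [Ax Fx] ->]; rewrite -Fx; exact: rr_ok.
have := runs_all uL allL; rewrite size_map HN => /(_ S (leqnn _) HS LS).
case/mapP => xs /HF [Ax Fx] ES.
have s1u := size_okr H1; have s2w := size_okr H2.
exists (fls X xs (size u)), (fls X xs (size u + size w)).
split.
  rewrite val_fls // -(st_rr _ REC Ax) -ES /S take_size_cat //.
split.
  rewrite val_fls // -(st_rr _ REC Ax) -ES /S catA take_size_cat.
    by rewrite last_cat L1.
  by rewrite size_cat s1u s2w.
have := fl_path (n := size w) (k := size u) Ax.
rewrite Fx drop_size_cat // take_size_cat // !size_cat addnA leq_addr.
by move=> /(_ isT).
Qed.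

Lemma fpath_B (A Q : finType) (E : Q -> A -> Q -> bool) i X (p p' : flower_state X) w :
  recognizes_star_mult E i i X ->
  is_path (flower_edge (X:=X)) p w p' ->
  is_path (edgeP E) (rhoP E i (val p)) w (rhoP E i (val p')).
Proof.
move=> REC; elim: w p => [|a w IH] p /=; first by move=> ->.
move=> [p1 [He Hp]]; exists (rhoP E i (val p1)); split; last exact: IH.
exact: (edge_rho REC He).
Qed.

Theorem mainTheorem3 (A : finType) (X : seq (seq A))
  (Q : finType) (E : Q -> A -> Q -> bool) (i : Q) :
  (forall x : seq A, x \in X -> x != [::]) ->
  minimal_generating_set X ->
  trim (edgeP E) i i ->
  recognizes_star_mult E i i X ->
  exists rho : flower_state X -> Q,
    sharp_reduction (flower_edge (X:=X)) (flower_omega X) (flower_omega X)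
                    (edgeP E) i i rho.
Proof.
move=> NE MIN TRIM REC.
exists (fun p => rhoP E i (val p)).
have rho0 : rhoP E i (val (flower_omega X)) = i by rewrite /rhoP /= take0.
have sharp : forall p : flower_state X, rhoP E i (val p) = i -> p = flower_omega X.
  move=> [[u v] Hp] /= Hr; apply: val_inj => /=.
  case/orP: Hp => [/eqP //|/and3P [Hu Hv Hx]] /=.
  have [R1 R2] := runX_ok (starX REC Hx).
  have := noint REC MIN Hx R1 R2 (k := size u).
  rewrite size_cat lt0n size_eq0 Hu -{1}(addn0 (size u)) ltn_add2l lt0n size_eq0 Hv.
  by move=> /(_ isT); rewrite /rhoP /= in Hr; rewrite Hr eqxx.
split; last by split.
split.
  move=> q; have [u [v [/is_path_okr [s1 [H1 L1]] /is_path_okr [s3 [H3 L3]]]]] := TRIM q.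
  have [p [_ [Hp _]]] := back REC MIN NE H1 L1 (w := [::]) (s2 := [::]) (erefl _) (erefl _) H3 L3.
  by exists p.
split => //; split => //.
move=> q q' w; split.
  move=> /is_path_okr [s2 [H2 L2]].
  have [u [_ [/is_path_okr [s1 [H1 L1]] _]]] := TRIM q.
  have [_ [v [_ /is_path_okr [s3 [H3 L3]]]]] := TRIM q'.
  exact: back REC MIN NE H1 L1 H2 L2 H3 L3.
move=> [p [p' [<- [<- Hp]]]]; exact: fpath_B REC Hp.
Qed.
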